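(* Let $k\geq\ell\geq t+2$ and $n\geq2L(k,t)$. (i) If $\ell\geq2t+2$, then $r_1(n,k,\ell,t)>r_2(n,k,\ell,t)$. (ii) If $\ell\leq2t+1$ and $(k,\ell)\notin\{(2t+1,2t+1),(4,3)\}$, then $r_1(n,k,\ell,t)<r_2(n,k,\ell,t)$.
   Context: $S(n,k)$ is the Stirling number of the second kind (number of partitions of an $n$-set into $k$ nonempty blocks), with $S(n,a)=0$ for $a\leq0$. $L(k,t)=(t+1)+(k-t+1)\log_2((t+1)(k-t+1))$. $r_1(n,k,\ell,t)=\Big(\sum_{j=1}^{\ell-t}(-1)^{j-1}\binom{\ell-t}{j}S(n-t-j,k-t-j)\Big)\big(S(n-t,\ell-t)+t\big)$ and $r_2(n,k,\ell,t)=S(n-t-1,k-t-1)\big((t+1)S(n-t,\ell-t)-tS(n-t-1,\ell-t-1)\big)$. *)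

(* Defs.v *)
From Stdlib Require Import Reals ZArith List Lia Lra.
Open Scope Z_scope.

Fixpoint stirling2 (n k : nat) : nat :=
  match n, k with
  | O, O => 1%nat
  | O, S _ => 0%nat
  | S _, O => 0%nat
  | S n', S k' => (S k' * stirling2 n' (S k') + stirling2 n' k')%nat
  end.

(* S(n,a) with integer arguments, with the paper's convention S(n,a)=0 for a<=0
   (and 0 for negative n, which never occurs under the hypotheses). *)
Definition SZ (n a : Z) : Z :=
  if (a <=? 0) then 0
  else if (n <? 0) then 0
  else Z.of_nat (stirling2 (Z.to_nat n) (Z.to_nat a)).

Fixpoint binom (n k : nat) : nat :=
  match n, k with
  | _, O => 1%nat
  | O, S _ => 0%nat
  | S n', S k' => (binom n' k' + binom n' (S k'))%nat
  end.

Definition r1 (n k l t : nat) : Z :=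
  let N := Z.of_nat n in let K := Z.of_nat k in
  let Lz := Z.of_nat l in let T := Z.of_nat t in
  (fold_right Z.add 0
     (map (fun j : nat =>
             let J := Z.of_nat j in
             (-1) ^ (J - 1) * Z.of_nat (binom (l - t) j) * SZ (N - T - J) (K - T - J))
          (seq 1 (l - t))))
  * (SZ (N - T) (Lz - T) + T).

Definition r2 (n k l t : nat) : Z :=
  let N := Z.of_nat n in let K := Z.of_nat k in
  let Lz := Z.of_nat l in let T := Z.of_nat t in
  SZ (N - T - 1) (K - T - 1)
  * ((T + 1) * SZ (N - T) (Lz - T) - T * SZ (N - T - 1) (Lz - T - 1)).

Open Scope R_scope.
Definition log2 (x : R) : R := ln x / ln 2.

Definition Lkt (k t : nat) : R :=
  (INR t + 1) + (INR k - INR t + 1) * log2 ((INR t + 1) * (INR k - INR t + 1)).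
Close Scope R_scope.

(* Main.v *)
Require Import Defs.
From Stdlib Require Import Reals ZArith List Lia Lra Psatz.

Fixpoint ff (x j : nat) : nat :=
  match j with O => 1%nat | S j' => (ff x j' * (x - j'))%nat end.

Fixpoint sumn (f : nat -> nat) (N : nat) : nat :=
  match N with O => 0%nat | S N' => (sumn f N' + f N')%nat end.

Lemma ff_zero : forall x j, (x < j)%nat -> ff x j = 0%nat.
Proof.
  intros x j; induction j as [|j IH]; intros H; [lia|].
  simpl. destruct (Nat.eq_dec j x) as [->|Hne].
  - rewrite Nat.sub_diag; lia.
  - rewrite IH by lia. lia.
Qed.

Lemma ff_S : forall x j, ff (S x) (S j) = (S x * ff x j)%nat.
Proof.
  intros x j; induction j as [|j IH].
  - simpl. lia.
  - change (ff (S x) (S (S j))) with (ff (S x) (S j) * (S x - S j))%nat.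
    rewrite IH. simpl ff. replace (S x - S j)%nat with (x - j)%nat by lia. lia.
Qed.

Lemma ff_mul : forall x j, (x * ff x j = ff x (S j) + j * ff x j)%nat.
Proof.
  intros x j. simpl. destruct (le_lt_dec j x).
  - replace x with ((x - j) + j)%nat at 1 by lia. nia.
  - rewrite ff_zero by lia. lia.
Qed.

Lemma sumn_ext : forall f g N, (forall j, (j < N)%nat -> f j = g j) -> sumn f N = sumn g N.
Proof.
  intros f g N; induction N; intros H; simpl; auto.
  rewrite IHN by (intros; apply H; lia). rewrite H by lia. auto.
Qed.

Lemma sumn_add : forall f g N, sumn (fun j => f j + g j)%nat N = (sumn f N + sumn g N)%nat.
Proof. intros f g N; induction N; simpl; lia. Qed.

Lemma sumn_mul : forall c f N, sumn (fun j => c * f j)%nat N = (c * sumn f N)%nat.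
Proof. intros c f N; induction N; simpl; nia. Qed.

Lemma sumn_shift : forall f N, sumn f (S N) = (f 0 + sumn (fun j => f (S j)) N)%nat.
Proof. intros f N; induction N; simpl in *; lia. Qed.

Lemma stir_zero : forall M p, (M < p)%nat -> stirling2 M p = 0%nat.
Proof.
  induction M; intros p H; destruct p; simpl; try lia.
  rewrite !IHM by lia. lia.
Qed.

Lemma stir_pos : forall M p, (p <= M)%nat -> (1 <= p)%nat -> (0 < stirling2 M p)%nat.
Proof.
  induction M; intros p H1 H2; [lia|]. destruct p; [lia|]. simpl.
  destruct p.
  - destruct M; simpl; [lia|]. specialize (IHM 1%nat). simpl in IHM. lia.
  - assert (0 < stirling2 M (S p))%nat by (apply IHM; lia). lia.
Qed.

Lemma sum0 : forall N, sumn (fun j => ff 0 j * stirling2 0 j)%nat (S N) = 1%nat.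
Proof.
  induction N. simpl. auto.
  change (sumn (fun j => ff 0 j * stirling2 0 j)%nat (S (S N))) with
    (sumn (fun j => ff 0 j * stirling2 0 j)%nat (S N) + ff 0 (S N) * stirling2 0 (S N))%nat.
  rewrite IHN. simpl stirling2. lia.
Qed.

Lemma stir_identity : forall M N x, (M < N)%nat ->
  (x ^ M = sumn (fun j => ff x j * stirling2 M j) N)%nat.
Proof.
  induction M; intros N x H.
  - destruct N; [lia|]. simpl Nat.pow.
    induction N. simpl. auto.
    change (sumn (fun j => ff x j * stirling2 0 j)%nat (S (S N))) with
      (sumn (fun j => ff x j * stirling2 0 j)%nat (S N) + ff x (S N) * stirling2 0 (S N))%nat.
    rewrite <- IHN by lia. simpl stirling2. lia.
  - destruct N as [|N]; [lia|].
    rewrite Nat.pow_succ_r'. rewrite (IHM (S N) x) by lia.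
    rewrite <- sumn_mul.
    rewrite (sumn_ext _ (fun j => ff x (S j) * stirling2 M j + j * ff x j * stirling2 M j)%nat)
      by (intros; rewrite Nat.mul_assoc, ff_mul; lia).
    rewrite sumn_add.
    rewrite sumn_shift. rewrite (sumn_shift (fun j => ff x j * stirling2 (S M) j)%nat).
    simpl (stirling2 (S M) 0). rewrite Nat.mul_0_r, Nat.add_0_l.
    rewrite (sumn_ext (fun j => ff x (S j) * stirling2 (S M) (S j))%nat
         (fun j => ff x (S j) * stirling2 M j + (S j * ff x (S j) * stirling2 M (S j)))%nat)
      by (intros; simpl stirling2; nia).
    rewrite sumn_add.
    rewrite (sumn_shift (fun j => j * ff x j * stirling2 M j)%nat).
    rewrite <- (sumn_shift (fun j => ff x (S j) * stirling2 M j)%nat).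
    change (sumn (fun j => ff x (S j) * stirling2 M j)%nat (S N)) with
      (sumn (fun j => ff x (S j) * stirling2 M j)%nat N + ff x (S N) * stirling2 M N)%nat.
    rewrite (stir_zero M N) by lia. lia.
Qed.

Lemma sumn_ge_term : forall f N i, (i < N)%nat -> (f i <= sumn f N)%nat.
Proof.
  intros f N; induction N; intros i H; [lia|]. simpl.
  destruct (Nat.eq_dec i N) as [->|]; [lia|]. specialize (IHN i). lia.
Qed.

Lemma sumn_split_le : forall f g p N, (forall j, j <> p -> (f j <= g j)%nat) ->
  (sumn f N <= f p + sumn g N)%nat.
Proof.
  intros f g p N H; induction N; simpl; [lia|].
  destruct (Nat.eq_dec N p) as [->|Hn].
  -
    assert (forall M, (M <= p)%nat -> (sumn f M <= sumn g M)%nat).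
    { induction M; intros; simpl; [lia|]. specialize (H M ltac:(lia)). specialize (IHM ltac:(lia)). lia. }
    specialize (H0 p (le_n _)). lia.
  - specialize (H N Hn). lia.
Qed.

Lemma stir_UB : forall M p, (ff p p * stirling2 M p <= p ^ M)%nat.
Proof.
  intros M p. destruct (le_lt_dec p M).
  - rewrite (stir_identity M (S M) p) by lia.
    apply (sumn_ge_term (fun j => ff p j * stirling2 M j)%nat). lia.
  - rewrite stir_zero by lia. lia.
Qed.

Lemma ff_le_pred : forall q j, j <> S q -> (ff (S q) j <= S q * ff q j)%nat.
Proof.
  intros q j Hj. destruct j as [|j]; [simpl; lia|].
  rewrite ff_S. apply Nat.mul_le_mono_l.
  destruct (le_lt_dec q j).
  - assert (j <> q) by congruence. rewrite (ff_zero q j) by lia. lia.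
  - simpl. replace (q - j)%nat with (S (q - j - 1)) by lia. nia.
Qed.

Lemma stir_LB : forall M p, (1 <= p)%nat ->
  (p ^ M <= ff p p * stirling2 M p + p * (p - 1) ^ M)%nat.
Proof.
  intros M p Hp. destruct p as [|q]; [lia|].
  set (N := S (M + S q)).
  rewrite (stir_identity M N (S q)) by (unfold N; lia).
  replace (S q - 1)%nat with q by lia.
  rewrite (stir_identity M N q) by (unfold N; lia).
  rewrite <- sumn_mul.
  apply (sumn_split_le (fun j => ff (S q) j * stirling2 M j)%nat
            (fun j => S q * (ff q j * stirling2 M j))%nat (S q) N).
  intros j Hj. rewrite Nat.mul_assoc. apply Nat.mul_le_mono_r. apply ff_le_pred; auto.
Qed.

Lemma binom_0 : forall n, binom n 0 = 1%nat.
Proof. destruct n; reflexivity. Qed.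

Lemma binom_zero : forall n k, (n < k)%nat -> binom n k = 0%nat.
Proof.
  induction n; intros k H; destruct k; simpl; try lia; auto.
  rewrite !IHn by lia. auto.
Qed.

Lemma binom_1 : forall n, binom n 1 = n.
Proof. induction n; simpl; auto. rewrite binom_0, IHn. lia. Qed.

Lemma binom_succ : forall n k, (binom n (S k) * S k = binom n k * (n - k))%nat.
Proof.
  induction n; intros k.
  - simpl. destruct k; simpl; lia.
  - destruct k as [|k].
    + simpl. rewrite binom_0, binom_1. lia.
    + change (binom (S n) (S (S k))) with (binom n (S k) + binom n (S (S k)))%nat.
      change (binom (S n) (S k)) with (binom n k + binom n (S k))%nat.
      pose proof (IHn k) as H1. pose proof (IHn (S k)) as H2.
      destruct (le_lt_dec n k).
      * rewrite (binom_zero n (S k)) by lia. rewrite (binom_zero n (S (S k))) by lia.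
        replace (S n - S k)%nat with 0%nat by lia. lia.
      * replace (S n - S k)%nat with (n - k)%nat by lia.
        replace (n - S k)%nat with (n - k - 1)%nat in H2 by lia.
        replace (n - k)%nat with (S (n - k - 1)) in * by lia. nia.
Qed.

Open Scope Z_scope.

Definition altf (c : nat -> Z) := fun j : nat => ((-1) ^ (Z.of_nat j - 1) * c j)%Z.
Definition alt (c : nat -> Z) i len := fold_right Z.add 0 (map (altf c) (seq i len)).

Lemma sgn_S : forall i, (1 <= i)%nat ->
  (-1) ^ (Z.of_nat (S i) - 1) = - (-1) ^ (Z.of_nat i - 1).
Proof.
  intros i H. replace (Z.of_nat (S i) - 1) with (Z.succ (Z.of_nat i - 1)) by lia.
  rewrite Z.pow_succ_r by lia. ring.
Qed.

Lemma sgn_pm : forall i, (1 <= i)%nat ->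
  (-1) ^ (Z.of_nat i - 1) = 1 \/ (-1) ^ (Z.of_nat i - 1) = -1.
Proof.
  induction i; intros H; [lia|]. destruct i.
  - left. reflexivity.
  - rewrite sgn_S by lia. destruct (IHi ltac:(lia)) as [-> | ->]; lia.
Qed.

Lemma alt_bound : forall c len i, (1 <= i)%nat -> (forall j, 0 <= c j) ->
  (forall j, (i <= j)%nat -> c (S j) <= c j) ->
  0 <= (-1) ^ (Z.of_nat i - 1) * alt c i len <= c i.
Proof.
  intros c len; induction len; intros i Hi Hpos Hdec.
  - unfold alt. simpl. specialize (Hpos i). lia.
  - unfold alt. simpl. fold (alt c (S i) len). unfold altf.
    specialize (IHlen (S i) ltac:(lia) Hpos ltac:(intros; apply Hdec; lia)).
    rewrite sgn_S in IHlen by lia.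
    pose proof (Hdec i (le_n _)). pose proof (Hpos i).
    destruct (sgn_pm i Hi) as [E|E]; rewrite E in *; nia.
Qed.

Close Scope Z_scope.
Open Scope R_scope.

Definition s (M p : nat) : R := INR (stirling2 M p).
Definition F (p : nat) : R := INR (ff p p).

Lemma s_nonneg : forall M p, 0 <= s M p.
Proof. intros; apply pos_INR. Qed.

Lemma F_pos : forall p, 0 < F p.
Proof.
  intros p; unfold F; apply lt_0_INR. induction p; [simpl; lia|].
  rewrite ff_S. lia.
Qed.

Lemma F_S : forall q, F (S q) = INR (S q) * F q.
Proof. intros q; unfold F; rewrite ff_S, mult_INR; reflexivity. Qed.

Lemma UBr : forall M p, F p * s M p <= INR p ^ M.
Proof.
  intros M p; unfold F, s. rewrite <- mult_INR, <- pow_INR. apply le_INR, stir_UB.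
Qed.

Lemma LBr0 : forall M p, (1 <= p)%nat -> INR p ^ M <= F p * s M p + INR p * (INR p - 1) ^ M.
Proof.
  intros M p Hp; unfold F, s.
  replace (INR p - 1) with (INR (p - 1)) by (rewrite minus_INR by lia; simpl; ring).
  rewrite <- !pow_INR, <- !mult_INR, <- plus_INR. apply le_INR, stir_LB; auto.
Qed.

Lemma pow_le1 : forall y n, 0 <= y -> y <= 1 -> y ^ n <= 1.
Proof.
  intros y n H0 H1; induction n; simpl; [lra|].
  assert (0 <= y ^ n) by (apply pow_le; lra). nra.
Qed.

Lemma powmono : forall x y E M, 0 <= x -> x <= y -> y <= 1 -> (E <= M)%nat -> x ^ M <= y ^ E.
Proof.
  intros x y E M H0 H1 H2 H3.
  apply Rle_trans with (y ^ M). apply pow_incr; lra.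
  replace M with (E + (M - E))%nat by lia. rewrite pow_add.
  assert (0 <= y ^ E) by (apply pow_le; lra).
  assert (y ^ (M - E) <= 1) by (apply pow_le1; lra).
  assert (0 <= y ^ (M - E)) by (apply pow_le; lra). nra.
Qed.

Lemma base_le : forall p K, (1 <= p)%nat -> (p <= K)%nat ->
  0 <= (INR p - 1) / INR p /\ (INR p - 1) / INR p <= (INR K - 1) / INR K
  /\ (INR K - 1) / INR K <= 1.
Proof.
  intros p K H1 H2. apply le_INR in H1, H2. simpl in H1.
  repeat split.
  - unfold Rdiv. apply Rmult_le_pos; [lra|]. left; apply Rinv_0_lt_compat; lra.
  - unfold Rdiv. apply Rle_trans with (1 - / INR p). right; field; lra.
    apply Rle_trans with (1 - / INR K). 2: right; field; lra.
    assert (/ INR K <= / INR p) by (apply Rinv_le_contravar; lra). lra.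
  - unfold Rdiv. assert (0 < / INR K) by (apply Rinv_0_lt_compat; lra).
    apply Rle_trans with (1 - / INR K). right; field; lra. lra.
Qed.

Section Beta.
Variables (K e : nat).
Hypothesis HK : (2 <= K)%nat.
Definition beta := ((INR K - 1) / INR K) ^ e.

Lemma beta_nonneg : 0 <= beta.
Proof. unfold beta. apply pow_le. destruct (base_le K K) as [H _]; lia || auto. Qed.

Lemma pow_split : forall p M, (1 <= p)%nat -> (INR p - 1) ^ M = ((INR p - 1) / INR p) ^ M * INR p ^ M.
Proof.
  intros p M H. apply le_INR in H. simpl in H. rewrite <- Rpow_mult_distr. f_equal. field. lra.
Qed.

Lemma base_beta : forall p M, (1 <= p)%nat -> (p <= K)%nat -> (e <= M)%nat ->
  ((INR p - 1) / INR p) ^ M <= beta.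
Proof.
  intros p M H1 H2 H3. destruct (base_le p K H1 H2) as (A & B & C).
  unfold beta; apply powmono; auto.
Qed.

Lemma thetaB : forall p M, (1 <= p)%nat -> (p <= K)%nat -> (e <= M)%nat ->
  INR p * (INR p - 1) ^ M <= INR K * beta * INR p ^ M.
Proof.
  intros p M H1 H2 H3. rewrite pow_split by auto.
  pose proof (base_beta p M H1 H2 H3).
  assert (0 <= ((INR p - 1) / INR p) ^ M) by (apply pow_le; apply (base_le p K); auto).
  assert (0 < INR p ^ M) by (apply pow_lt; apply lt_0_INR; lia).
  assert (INR p <= INR K) by (apply le_INR; auto).
  assert (0 <= INR p) by apply pos_INR.
  assert (0 <= beta) by apply beta_nonneg.
  replace (INR K * beta * INR p ^ M) with (INR K * (beta * INR p ^ M)) by ring.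
  apply Rmult_le_compat; auto.
  apply Rmult_le_pos; lra.
  apply Rmult_le_compat_r; lra.
Qed.

Lemma LBr : forall p M, (1 <= p)%nat -> (p <= K)%nat -> (e <= M)%nat ->
  INR p ^ M * (1 - INR K * beta) <= F p * s M p.
Proof.
  intros p M H1 H2 H3. pose proof (LBr0 M p H1). pose proof (thetaB p M H1 H2 H3). nra.
Qed.

Lemma ratio : forall q M, (q < K)%nat -> (e <= M)%nat ->
  s M q * (1 - INR K * beta) <= beta * s (S M) (S q).
Proof.
  intros q M H1 H2.
  pose proof (UBr M q) as U.
  pose proof (LBr (S q) (S M) ltac:(lia) ltac:(lia) ltac:(lia)) as Lb.
  rewrite F_S in Lb.
  assert (Hq : INR q = INR (S q) - 1) by (rewrite S_INR; ring).
  rewrite Hq in U.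
  assert (B : INR (S q) * (INR (S q) - 1) ^ M <= beta * INR (S q) ^ S M).
  { rewrite pow_split by lia. rewrite <- tech_pow_Rmult.
    pose proof (base_beta (S q) M ltac:(lia) ltac:(lia) H2).
    assert (0 <= ((INR (S q) - 1) / INR (S q)) ^ M) by (apply pow_le; apply (base_le (S q) K); lia).
    assert (0 < INR (S q) ^ M) by (apply pow_lt; apply lt_0_INR; lia).
    assert (0 <= INR (S q)) by apply pos_INR.
    replace (beta * (INR (S q) * INR (S q) ^ M)) with (INR (S q) * (beta * INR (S q) ^ M)) by ring.
    apply Rmult_le_compat_l; auto. apply Rmult_le_compat_r; lra. }
  assert (P : 0 < INR (S q) ^ S M) by (apply pow_lt; apply lt_0_INR; lia).
  pose proof (s_nonneg M q). pose proof (s_nonneg (S M) (S q)). pose proof (F_pos q).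
  assert (0 <= INR (S q)) by apply pos_INR.
  assert (s M q * (1 - INR K * beta) * INR (S q) ^ S M <= beta * s (S M) (S q) * INR (S q) ^ S M).
  { apply Rle_trans with (s M q * (INR (S q) * F q * s (S M) (S q))).
    { rewrite Rmult_assoc, (Rmult_comm _ (INR (S q) ^ S M)). apply Rmult_le_compat_l; auto. }
    apply Rle_trans with (INR (S q) * (INR (S q) - 1) ^ M * s (S M) (S q)).
    { replace (s M q * (INR (S q) * F q * s (S M) (S q))) with
        (INR (S q) * s (S M) (S q) * (F q * s M q)) by ring.
      replace (INR (S q) * (INR (S q) - 1) ^ M * s (S M) (S q)) with
        (INR (S q) * s (S M) (S q) * (INR (S q) - 1) ^ M) by ring.
      apply Rmult_le_compat_l; [nra|auto]. }
    nra. }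
  nra.
Qed.
End Beta.

Lemma ln_le' : forall x y, 0 < x -> x <= y -> ln x <= ln y.
Proof. intros x y H1 H2. destruct H2 as [H2|<-]; [left; apply ln_increasing; auto|lra]. Qed.

Lemma ln_le_inv : forall x y, 0 < x -> 0 < y -> ln x <= ln y -> x <= y.
Proof.
  intros x y H1 H2 H3. destruct (Rle_or_lt x y) as [|H]; auto.
  pose proof (ln_increasing y x H2 H). lra.
Qed.

Lemma bernoulli : forall x n, 0 <= x -> 1 + INR n * x <= (1 + x) ^ n.
Proof.
  intros x n H; induction n; [simpl; lra|].
  rewrite S_INR, <- tech_pow_Rmult.
  assert (0 <= INR n) by apply pos_INR.
  nra.
Qed.

Lemma ln2_pos : 0 < ln 2.
Proof. pose proof ln_lt_2. lra. Qed.

Lemma Nbound : forall (n t K : nat) c, 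
  INR n * ln 2 >= 2 * (INR t + 1) * ln 2 + 2 * (INR K + 1) * ln ((INR t + 1) * (INR K + 1)) ->
  c * ln 2 <= ln ((INR t + 1) * (INR K + 1)) ->
  2 * (INR t + 1) + 2 * (INR K + 1) * c <= INR n.
Proof.
  intros n t K c H1 H2. pose proof ln2_pos.
  assert (0 <= INR K) by apply pos_INR.
  apply Rmult_le_reg_r with (ln 2); auto. nra.
Qed.

Lemma KB_core : forall (n t K : nat), (2 <= K)%nat ->
  INR n * ln 2 >= 2 * (INR t + 1) * ln 2 + 2 * (INR K + 1) * ln ((INR t + 1) * (INR K + 1)) ->
  (t + K <= n)%nat /\
  ((INR K - 1) / INR K) ^ (n - t - K) * ((INR t + 1) * (INR K + 1)) ^ 2 <= 2.
Proof.
  intros n t K HK H.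
  set (X := (INR t + 1) * (INR K + 1)) in *.
  assert (HKr : 2 <= INR K) by (apply le_INR in HK; simpl in HK; lra).
  assert (Ht : 0 <= INR t) by apply pos_INR.
  assert (HX1 : 1 <= X) by (unfold X; nra).
  assert (lnX : 0 <= ln X) by (rewrite <- ln_1; apply ln_le'; lra).
  pose proof ln2_pos as l2.
  assert (lnX2 : 1 * ln 2 <= ln X).
  { rewrite Rmult_1_l. apply ln_le'; [lra|]. unfold X. nra. }
  pose proof (Nbound n t K 1 H lnX2) as Hn.
  assert (Hnat : (t + K <= n)%nat).
  { apply INR_le. rewrite plus_INR. lra. }
  split; auto.
  set (e := (n - t - K)%nat).
  assert (He : INR e = INR n - INR t - INR K).
  { unfold e. rewrite !minus_INR by lia. ring. }
  set (D := ln (INR K / (INR K - 1))).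
  assert (HD : ln 2 <= (INR K - 1) * D).
  { unfold D. 
    assert (E1 : INR K / (INR K - 1) = 1 + 1 / (INR (K - 1))).
    { rewrite minus_INR by lia. simpl. field. lra. }
    pose proof (bernoulli (1 / INR (K - 1)) (K - 1) ltac:(
       unfold Rdiv; apply Rmult_le_pos; [lra|]; left; apply Rinv_0_lt_compat;
       rewrite minus_INR by lia; simpl; lra)) as Bn.
    rewrite <- E1 in Bn.
    replace (1 + INR (K - 1) * (1 / INR (K - 1))) with 2 in Bn
      by (rewrite minus_INR by lia; simpl; field; lra).
    apply ln_le' in Bn; [|lra]. rewrite ln_pow in Bn.
    2:{ apply Rdiv_lt_0_compat; lra. }
    rewrite minus_INR in Bn by lia. simpl in Bn. lra. }
  assert (HDpos : 0 < D).
  { assert (0 < INR K - 1) by lra. 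
    apply Rmult_lt_reg_l with (INR K - 1); auto. lra. }
  assert (He0 : 0 <= INR e) by apply pos_INR.
  assert (Key : 2 * ln X <= ln 2 + INR e * D).
  { assert (A1 : INR e * ln 2 <= INR e * ((INR K - 1) * D)) by (apply Rmult_le_compat_l; auto).
    assert (A2 : (INR K - 1) * (2 * ln X) <= (INR K - 1) * (ln 2 + INR e * D)).
    { rewrite He in A1. rewrite He. nra. }
    apply Rmult_le_reg_l with (INR K - 1); lra. }
  assert (Hb : 0 < (INR K - 1) / INR K) by (apply Rdiv_lt_0_compat; lra).
  apply ln_le_inv.
  { apply Rmult_lt_0_compat; apply pow_lt; lra. }
  lra.
  rewrite ln_mult by (apply pow_lt; lra).
  rewrite !ln_pow by lra.
  replace ((INR K - 1) / INR K) with (/ (INR K / (INR K - 1))) by (field; lra).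
  rewrite ln_Rinv by (apply Rdiv_lt_0_compat; lra).
  fold D. simpl (INR 2). lra.
Qed.

Close Scope R_scope.
Open Scope Z_scope.

Lemma SZ_nat : forall a b : nat, (1 <= b)%nat -> SZ (Z.of_nat a) (Z.of_nat b) = Z.of_nat (stirling2 a b).
Proof.
  intros a b H. unfold SZ.
  destruct (Z.leb_spec (Z.of_nat b) 0); [lia|].
  destruct (Z.ltb_spec (Z.of_nat a) 0); [lia|].
  rewrite !Nat2Z.id. reflexivity.
Qed.

Lemma SZ_nonpos : forall a b, b <= 0 -> SZ a b = 0.
Proof. intros a b H. unfold SZ. destruct (Z.leb_spec b 0); lia. Qed.

Section Eqs.
Variables n k l t : nat.
Hypothesis Hl : (t + 2 <= l)%nat.
Hypothesis Hk : (l <= k)%nat.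
Hypothesis Hn : (k + 1 <= n)%nat.

Definition cc (j : nat) : Z :=
  Z.of_nat (binom (l - t) j * stirling2 (n - t - j) (k - t - j)).

Lemma r1_eq : r1 n k l t =
  alt cc 1 (l - t) * (Z.of_nat (stirling2 (n - t) (l - t)) + Z.of_nat t).
Proof.
  unfold r1. f_equal.
  - unfold alt. f_equal. apply map_ext_in. intros j Hj. apply in_seq in Hj.
    unfold altf, cc. rewrite Nat2Z.inj_mul. rewrite Z.mul_assoc. f_equal.
    destruct (Nat.eq_dec j (k - t)) as [E|E].
    + rewrite SZ_nonpos by lia.
      replace (k - t - j)%nat with 0%nat by lia.
      replace (n - t - j)%nat with (S (n - t - j - 1)) by lia. simpl. ring.
    + replace (Z.of_nat n - Z.of_nat t - Z.of_nat j) with (Z.of_nat (n - t - j)) by lia.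
      replace (Z.of_nat k - Z.of_nat t - Z.of_nat j) with (Z.of_nat (k - t - j)) by lia.
      rewrite SZ_nat by lia. reflexivity.
  - replace (Z.of_nat n - Z.of_nat t) with (Z.of_nat (n - t)) by lia.
    replace (Z.of_nat l - Z.of_nat t) with (Z.of_nat (l - t)) by lia.
    rewrite SZ_nat by lia. reflexivity.
Qed.

Lemma r2_eq : r2 n k l t =
  Z.of_nat (stirling2 (n - t - 1) (k - t - 1)) *
  ((Z.of_nat t + 1) * Z.of_nat (stirling2 (n - t) (l - t)) -
   Z.of_nat t * Z.of_nat (stirling2 (n - t - 1) (l - t - 1))).
Proof.
  unfold r2.
  replace (Z.of_nat n - Z.of_nat t - 1) with (Z.of_nat (n - t - 1)) by lia.
  replace (Z.of_nat k - Z.of_nat t - 1) with (Z.of_nat (k - t - 1)) by lia.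
  replace (Z.of_nat l - Z.of_nat t - 1) with (Z.of_nat (l - t - 1)) by lia.
  replace (Z.of_nat n - Z.of_nat t) with (Z.of_nat (n - t)) by lia.
  replace (Z.of_nat l - Z.of_nat t) with (Z.of_nat (l - t)) by lia.
  rewrite !SZ_nat by lia. reflexivity.
Qed.

Lemma alt_decomp : alt cc 1 (l - t) = cc 1 - cc 2 + alt cc 3 (l - t - 2).
Proof.
  replace (l - t)%nat with (S (S (l - t - 2))) at 1 by lia.
  unfold alt. simpl. change (altf cc 1) with (1 * cc 1). change (altf cc 2) with (-1 * cc 2). ring.
Qed.
End Eqs.

Close Scope Z_scope.
Open Scope R_scope.

Lemma ff_le_pow : forall x j, (ff x j <= x ^ j)%nat.
Proof.
  intros x j; induction j; simpl; [lia|]. rewrite Nat.mul_comm. apply Nat.mul_le_mono; lia.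
Qed.

Lemma pow48 : forall d, (9 <= d)%nat -> (8 * 3 ^ d <= 4 ^ d)%nat.
Proof.
  intros d H. induction H.
  { assert (H0 : (2 * 3 ^ 3 <= 4 ^ 3)%nat) by (simpl; lia).
    apply (Nat.pow_le_mono_l _ _ 3) in H0.
    rewrite Nat.pow_mul_l, <- !Nat.pow_mul_r in H0.
    change (2 ^ 3)%nat with 8%nat in H0. exact H0. }
  simpl. lia.
Qed.

Lemma P1 : forall m K L, (2 <= L)%nat -> (L + 1 <= K)%nat -> (2 <= m)%nat ->
  (4 * (K - 1) ^ (m - 2) * (L - 1) ^ (m - 1) <= (K - 2) ^ (m - 2) * L ^ m)%nat.
Proof.
  intros m K L H1 H2 H3.
  assert (E : (L ^ m = L ^ (m - 2) * (L * L))%nat)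
    by (replace m with ((m - 2) + 2)%nat at 1 by lia; rewrite Nat.pow_add_r; simpl; lia).
  rewrite E.
  replace ((L - 1) ^ (m - 1))%nat with ((L - 1) ^ (m - 2) * (L - 1))%nat
    by (replace (m - 1)%nat with ((m - 2) + 1)%nat by lia; rewrite Nat.pow_add_r; simpl; lia).
  assert (((K - 1) * (L - 1)) ^ (m - 2) <= ((K - 2) * L) ^ (m - 2))%nat
    by (apply Nat.pow_le_mono_l; nia).
  rewrite !Nat.pow_mul_l in H.
  assert (4 * (L - 1) <= L * L)%nat by nia.
  nia.
Qed.

Lemma P2 : forall m K L, (2 <= L)%nat -> (L + 1 <= K)%nat -> (4 <= K)%nat ->
  (2 * L + 6 <= m)%nat -> (11 <= m)%nat ->
  (16 * (K - 1) ^ (m - 2) * ff L L <= (K - 2) ^ (m - 2) * L ^ m)%nat.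
Proof.
  intros m K L H1 H2 H3 H4 H5.
  destruct (Nat.eq_dec L 2) as [->|HL].
  - change (ff 2 2) with 2%nat.
    assert (E : (2 ^ m = 2 ^ (m - 2) * 4)%nat)
      by (replace m with ((m - 2) + 2)%nat at 1 by lia; rewrite Nat.pow_add_r; simpl; lia).
    rewrite E.
    set (d := (m - 2)%nat) in *.
    pose proof (pow48 d ltac:(lia)) as E48.
    assert ((4 * (K - 1)) ^ d <= (3 * (2 * (K - 2))) ^ d)%nat by (apply Nat.pow_le_mono_l; lia).
    rewrite !Nat.pow_mul_l in H.
    assert (0 < 3 ^ d)%nat by (apply Nat.neq_0_lt_0, Nat.pow_nonzero; lia).
    assert (8 * (K - 1) ^ d * 3 ^ d <= 2 ^ d * (K - 2) ^ d * 3 ^ d)%nat by nia.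
    assert (8 * (K - 1) ^ d <= 2 ^ d * (K - 2) ^ d)%nat.
    { apply (Nat.mul_le_mono_pos_r _ _ (3 ^ d)); auto. }
    nia.
  - assert (A1 : (((K - 1) * (L - 1)) ^ (m - 2) <= ((K - 2) * L) ^ (m - 2))%nat)
      by (apply Nat.pow_le_mono_l; nia).
    rewrite !Nat.pow_mul_l in A1.
    assert (A2 : (L ^ (m - 2) <= L ^ m)%nat) by (apply Nat.pow_le_mono_r; lia).
    assert (A3 : (ff L L <= L ^ L)%nat) by apply ff_le_pow.
    assert (A4 : (L ^ L <= ((L - 1) * (L - 1)) ^ L)%nat) by (apply Nat.pow_le_mono_l; nia).
    rewrite Nat.pow_mul_l, <- Nat.pow_add_r in A4.
    assert (A5 : (16 <= (L - 1) ^ 4)%nat).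
    { apply Nat.le_trans with (2 ^ 4)%nat; [simpl; lia|]. apply Nat.pow_le_mono_l; lia. }
    assert (A6 : ((L - 1) ^ 4 * (L - 1) ^ (L + L) <= (L - 1) ^ (m - 2))%nat).
    { rewrite <- Nat.pow_add_r. apply Nat.pow_le_mono_r; lia. }
    assert (A7 : (16 * ff L L <= (L - 1) ^ (m - 2))%nat) by nia.
    assert (A8 : (0 <= (K - 1) ^ (m - 2))%nat) by lia.
    assert (16 * (K - 1) ^ (m - 2) * ff L L <= (K - 1) ^ (m - 2) * (L - 1) ^ (m - 2))%nat by nia.
    nia.
Qed.

Section Core.
Variables m K L t : nat.
Hypothesis HL2 : (2 <= L)%nat.
Hypothesis HLK : (L <= K)%nat.
Hypothesis HB : beta K (m - K) * ((INR t + 1) * (INR K + 1)) ^ 2 <= 2.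
Hypothesis Hm : (t + 2 * K + 4 <= m)%nat.

Let b := beta K (m - K).
Let HK2 : (2 <= K)%nat. Proof. lia. Qed.

Definition a (j : nat) : nat := stirling2 (m - j) (K - j).
Definition c (j : nat) : Z := Z.of_nat (binom L j * a j).

Lemma b_nonneg : 0 <= b.
Proof. apply beta_nonneg; lia. Qed.

Lemma bK : b * (INR K + 1) ^ 2 <= 2.
Proof.
  pose proof b_nonneg. assert (0 <= INR t) by apply pos_INR.
  assert (0 <= INR K) by apply pos_INR.
  apply Rle_trans with (b * ((INR t + 1) * (INR K + 1)) ^ 2); auto.
  apply Rmult_le_compat_l; auto. apply pow_incr. nra.
Qed.

Lemma Kr2 : 2 <= INR K.
Proof. apply le_INR in HK2. simpl in HK2. lra. Qed.

Lemma Kb34 : 4 * INR K * b <= 3.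
Proof. pose proof bK. pose proof b_nonneg. pose proof Kr2. nra. Qed.

Lemma binomR : forall j, INR (binom L (S j)) * INR (S j) = INR (binom L j) * INR (L - j).
Proof. intros j. rewrite <- !mult_INR. f_equal. apply binom_succ. Qed.

Lemma ratio_a : forall j, (S j < K)%nat ->
  INR (a (S (S j))) * (1 - INR K * b) <= b * INR (a (S j)).
Proof.
  intros j Hj. unfold a.
  pose proof (ratio K (m - K) HK2 (K - S (S j)) (m - S (S j)) ltac:(lia) ltac:(lia)) as R.
  unfold s in R. replace (S (m - S (S j))) with (m - S j)%nat in R by lia.
  replace (S (K - S (S j))) with (K - S j)%nat in R by lia. exact R.
Qed.

Lemma dec : forall j, (2 <= j)%nat -> (c (S j) <= c j)%Z.
Proof.
  intros j Hj. unfold c. apply Nat2Z.inj_le.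
  destruct (le_lt_dec L j) as [HLj|HLj].
  { rewrite binom_zero by lia. lia. }
  apply INR_le. rewrite !mult_INR.
  destruct j as [|j]; [lia|].
  pose proof (ratio_a j ltac:(lia)) as R.
  pose proof (binomR (S j)) as BR.
  pose proof Kb34. pose proof b_nonneg. pose proof Kr2.
  set (B1 := INR (binom L (S (S j)))) in *.
  set (B0 := INR (binom L (S j))) in *.
  set (x := INR (a (S (S j)))) in *.
  set (y := INR (a (S j))) in *.
  assert (0 <= B1) by apply pos_INR. assert (0 <= B0) by apply pos_INR.
  assert (0 <= x) by apply pos_INR. assert (0 <= y) by apply pos_INR.
  rewrite minus_INR in BR by lia.
  assert (HS : 3 <= INR (S (S j))) by (apply le_INR in Hj; rewrite !S_INR in *; simpl in *; lra).
  assert (HLj' : INR L - INR (S j) <= INR K) by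
    (apply le_INR in HLK; assert (0 <= INR (S j)) by apply pos_INR; lra).
  assert (HLj0 : 0 <= INR L - INR (S j)) by (assert (INR (S j) <= INR L) by (apply le_INR; lia); lra).
  assert (Hpos : 0 < INR (S (S j)) * (1 - INR K * b)) by nra.
  apply Rmult_le_reg_r with (INR (S (S j)) * (1 - INR K * b)); auto.
  apply Rle_trans with (B0 * (INR L - INR (S j)) * (x * (1 - INR K * b))).
  { right. rewrite <- BR. ring. }
  apply Rle_trans with (B0 * (INR L - INR (S j)) * (b * y)).
  { apply Rmult_le_compat_l; [nra|auto]. }
  assert ((INR L - INR (S j)) * b <= INR (S (S j)) * (1 - INR K * b)) by nra.
  replace (B0 * (INR L - INR (S j)) * (b * y)) with (B0 * y * ((INR L - INR (S j)) * b)) by ring.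
  replace (B0 * y * (INR (S (S j)) * (1 - INR K * b))) with
    (B0 * y * (INR (S (S j)) * (1 - INR K * b))) by ring.
  apply Rmult_le_compat_l; nra.
Qed.


Lemma a1_pos : (0 < a 1)%nat.
Proof. unfold a. apply stir_pos; lia. Qed.

Lemma c2_lt_a1 : (c 2 < Z.of_nat (a 1))%Z.
Proof.
  unfold c. apply Nat2Z.inj_lt. apply INR_lt. rewrite mult_INR.
  pose proof (ratio_a 0 ltac:(lia)) as R.
  pose proof (binomR 1) as BR. rewrite binom_1 in BR.
  rewrite minus_INR in BR by lia. simpl (INR 1) in BR. simpl (INR 2) in BR.
  pose proof bK. pose proof b_nonneg. pose proof Kr2.
  pose proof (lt_0_INR _ a1_pos) as A1.
  assert (0 <= INR (a 2)) by apply pos_INR.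
  assert (HL : INR L <= INR K) by (apply le_INR; auto).
  assert (HL2' : 2 <= INR L) by (apply le_INR in HL2; simpl in HL2; lra).
  set (B2 := INR (binom L 2)) in *.
  assert (HB2 : B2 = INR L * (INR L - 1) / 2) by lra.
  assert (HB2K : B2 <= INR K * (INR K - 1) / 2) by (rewrite HB2; nra).
  assert (Hc : (B2 + INR K) * b < 1).
  { assert ((INR K * (INR K - 1) / 2 + INR K) * b < 1) by nra. nra. }
  assert (Hpos : 0 < 1 - INR K * b) by nra.
  apply Rmult_lt_reg_r with (1 - INR K * b); auto.
  apply Rle_lt_trans with (B2 * (b * INR (a 1))).
  { rewrite Rmult_assoc. apply Rmult_le_compat_l; [nra|auto]. }
  nra.
Qed.


Lemma natA : (2 * t * (L * L ^ L) < L ^ m)%nat.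
Proof.
  assert (H1 : (2 * t < L ^ (m - L - 1))%nat).
  { assert (t < 2 ^ t)%nat by (apply Nat.pow_gt_lin_r; lia).
    apply Nat.lt_le_trans with (2 ^ (t + 1))%nat.
    { rewrite Nat.pow_add_r. simpl. lia. }
    apply Nat.le_trans with (L ^ (t + 1))%nat.
    { apply Nat.pow_le_mono_l; lia. }
    apply Nat.pow_le_mono_r; lia. }
  replace m with ((m - L - 1) + S L)%nat by lia.
  rewrite Nat.pow_add_r. change (L ^ S L)%nat with (L * L ^ L)%nat.
  assert (0 < L * L ^ L)%nat.
  { apply Nat.mul_pos_pos; [lia|]. apply Nat.neq_0_lt_0, Nat.pow_nonzero; lia. }
  nia.
Qed.

Lemma case_iia : (L <= t)%nat ->
  (t * (stirling2 (m - 1) (L - 1) + L) < stirling2 m L)%nat.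
Proof.
  intros HLt. pose proof natA as NA. apply INR_lt. rewrite mult_INR, plus_INR.
  pose proof b_nonneg. pose proof Kr2.
  assert (exists q, L = S q) as [q EL] by (exists (L - 1)%nat; lia).
  rewrite EL in NA |- *.
  replace (S q - 1)%nat with q by lia.
  pose proof (LBr K (m - K) HK2 (S q) m ltac:(lia) ltac:(lia) ltac:(lia)) as LB.
  pose proof (UBr (m - 1) q) as UB.
  pose proof (base_beta K (m - K) (S q) (m - 1) ltac:(lia) ltac:(lia) ltac:(lia)) as BB.
  fold b in LB, BB.
  assert (Hq : INR q = INR (S q) - 1) by (rewrite S_INR; ring).
  rewrite Hq in UB. rewrite pow_split in UB by lia.
  assert (HLr : 2 <= INR (S q)) by (replace 2 with (INR 2) by (simpl; lra); apply le_INR; lia).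
  set (Lr := INR (S q)) in *.
  assert (Hpm : Lr ^ m = Lr * Lr ^ (m - 1)).
  { replace m with (S (m - 1)) at 1 by lia. reflexivity. }
  pose proof (F_S q) as FS. fold Lr in FS.
  pose proof (F_pos q). pose proof (F_pos (S q)).
  pose proof (pow_lt Lr (m - 1) ltac:(lra)).
  assert (0 <= ((Lr - 1) / Lr) ^ (m - 1)) by (apply pow_le; apply (base_le (S q) K); lia).
  assert (U2 : F q * s (m - 1) q <= b * Lr ^ (m - 1)) by nra.
  assert (FL : F (S q) <= Lr ^ S q).
  { unfold F, Lr. rewrite <- pow_INR. apply le_INR, ff_le_pow. }
  apply lt_INR in NA. rewrite !mult_INR, !pow_INR in NA. fold Lr in NA. simpl (INR 2) in NA.
  assert (Ht : 2 <= INR t) by (replace 2 with (INR 2) by (simpl; lra); apply le_INR; lia).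
  assert (HKt : 4 * (INR K + INR t) * b <= 2).
  { set (P := (INR t + 1) * (INR K + 1)) in *.
    assert (P1 : INR K + INR t <= P) by (unfold P; nra).
    assert (P4 : 4 <= P) by (unfold P; nra).
    assert (HP : 4 * (INR K + INR t) <= P ^ 2) by (simpl; nra).
    apply Rle_trans with (b * P ^ 2); [|exact HB]. nra. }
  assert (0 <= s (m - 1) q) by apply s_nonneg. assert (0 <= s m (S q)) by apply s_nonneg.
  apply Rmult_lt_reg_r with (F (S q)); auto.
  assert (E1 : INR t * (s (m - 1) q + Lr) * F (S q) =
               INR t * Lr * (F q * s (m - 1) q) + INR t * Lr * F (S q)) by (rewrite FS; ring).
  change (INR t * (s (m - 1) q + Lr) * F (S q) < s m (S q) * F (S q)). rewrite E1.
  assert (T1 : INR t * Lr * (F q * s (m - 1) q) <= INR t * b * Lr ^ m).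
  { rewrite Hpm. replace (INR t * b * (Lr * Lr ^ (m - 1))) with (INR t * Lr * (b * Lr ^ (m - 1))) by ring.
    apply Rmult_le_compat_l; [nra|auto]. }
  assert (T2 : 2 * (INR t * Lr * F (S q)) < Lr ^ m).
  { apply Rle_lt_trans with (2 * INR t * (Lr * Lr ^ S q)); [|auto].
    replace (2 * (INR t * Lr * F (S q))) with (2 * INR t * Lr * F (S q)) by ring.
    rewrite (Rmult_assoc (2 * INR t)). apply Rmult_le_compat_l; [nra|]. apply Rmult_le_compat_l; lra. }
  assert (0 < Lr ^ m) by (apply pow_lt; lra).
  assert (T3 : Lr ^ m * (1 - INR K * b) >= Lr ^ m / 2 + INR t * b * Lr ^ m) by nra.
  rewrite Rmult_comm. lra.
Qed.


Lemma case_iib : (L = t + 1)%nat -> (L + 1 <= K)%nat -> (4 <= K)%nat -> (t + 6 * K + 8 <= m)%nat ->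
  (Z.of_nat t * Z.of_nat (a 1) * (Z.of_nat (stirling2 (m - 1) (L - 1)) + Z.of_nat L)
   < (c 2 - c 3) * Z.of_nat (stirling2 m L))%Z.
Proof.
  intros HLt HKL HK4 Hm3.
  apply lt_IZR. rewrite !mult_IZR, minus_IZR, !plus_IZR. unfold c.
  rewrite <- !INR_IZR_INZ. rewrite !mult_INR.
  pose proof b_nonneg as b0. pose proof Kr2 as K2.
  assert (Ht1 : 1 <= INR t) by (replace 1 with (INR 1) by (simpl; lra); apply le_INR; lia).
  assert (HK4r : 4 <= INR K) by (replace 4 with (INR 4) by (simpl; lra); apply le_INR; lia).
  assert (Kb : 12 * INR K * b <= 1).
  { assert (HX : 2 * (INR K + 1) <= (INR t + 1) * (INR K + 1)) by nra.
    assert (HX2 : 4 * (INR K + 1) ^ 2 <= ((INR t + 1) * (INR K + 1)) ^ 2).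
    { replace (4 * (INR K + 1) ^ 2) with ((2 * (INR K + 1)) ^ 2) by ring.
      apply pow_incr. nra. }
    assert (b * (4 * (INR K + 1) ^ 2) <= 2) by (apply Rle_trans with (b * ((INR t + 1) * (INR K + 1)) ^ 2); [apply Rmult_le_compat_l|]; auto).
    nra. }
  set (al := 1 - INR K * b).
  assert (Hal : 11 / 12 <= al) by (unfold al; lra).
  pose proof (binomR 1) as BR1. rewrite binom_1 in BR1. rewrite minus_INR in BR1 by lia.
  pose proof (binomR 2) as BR2. rewrite minus_INR in BR2 by lia.
  change (INR 1) with 1 in BR1. change (INR (S 1)) with 2 in BR1, BR2.
  replace (INR 3) with 3 in BR2 by (simpl; lra).
  set (B2 := INR (binom L 2)) in *. set (B3 := INR (binom L 3)) in *.
  assert (HLr : INR L = INR t + 1) by (rewrite HLt, plus_INR; simpl; ring).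
  assert (B2pos : 0 < B2) by (rewrite HLr in BR1; nra).
  assert (B3pos : 0 <= B3) by apply pos_INR.
  pose proof (ratio_a 1 ltac:(lia)) as R3.
  set (A1 := INR (a 1)) in *. set (A2 := INR (a 2)) in *. set (A3 := INR (a 3)) in *.
  assert (A2p : 0 <= A2) by apply pos_INR. assert (A3p : 0 <= A3) by apply pos_INR.
  assert (A1p : 0 <= A1) by apply pos_INR.
  assert (HL2r : 2 <= INR L) by (replace 2 with (INR 2) by (simpl; lra); apply le_INR; lia).
  assert (HLK' : INR L + 1 <= INR K) by (rewrite <- S_INR; apply le_INR; lia).
  assert (C3 : 12 * (B3 * A3) <= B2 * A2).
  { assert (E : 12 * (B3 * A3) = 4 * B2 * (INR L - 2) * A3) by nra.
    rewrite E.
    assert (Q : 4 * (INR L - 2) * A3 <= A2).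
    { apply Rmult_le_reg_r with al; [lra|].
      assert (4 * (INR L - 2) * (A3 * al) <= 4 * (INR L - 2) * (b * A2)) by
        (apply Rmult_le_compat_l; [nra|auto]).
      assert (4 * (INR L - 2) * b <= al) by (unfold al; nra).
      nra. }
    nra. }
  pose proof (LBr K (m - K) HK2 (K - 2) (m - 2) ltac:(lia) ltac:(lia) ltac:(lia)) as LA2.
  pose proof (LBr K (m - K) HK2 L m ltac:(lia) ltac:(lia) ltac:(lia)) as LS.
  pose proof (UBr (m - 1) (K - 1)) as UA1.
  pose proof (UBr (m - 1) (L - 1)) as US'.
  fold b al in LA2, LS. unfold s in LA2, LS, UA1, US'.
  fold A1 in UA1. change (stirling2 (m - 2) (K - 2)) with (a 2) in LA2. fold A2 in LA2.
  set (Sr := INR (stirling2 m L)) in *. set (Sp := INR (stirling2 (m - 1) (L - 1))) in *.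
  assert (Srp : 0 <= Sr) by apply pos_INR. assert (Spp : 0 <= Sp) by apply pos_INR.
  assert (FK : F (K - 1) = INR (K - 1) * F (K - 2)).
  { replace (K - 1)%nat with (S (K - 2)) by lia. apply F_S. }
  assert (FL : F L = INR L * F (L - 1)).
  { replace L with (S (L - 1)) at 1 2 by lia. apply F_S. }
  pose proof (F_pos (K - 2)). pose proof (F_pos (L - 1)). pose proof (F_pos L). pose proof (F_pos (K - 1)).
  pose proof (P1 m K L ltac:(lia) ltac:(lia) ltac:(lia)) as NP1.
  pose proof (P2 m K L ltac:(lia) ltac:(lia) ltac:(lia) ltac:(lia) ltac:(lia)) as NP2.
  apply le_INR in NP1. apply le_INR in NP2. rewrite !mult_INR, !pow_INR in NP1.
  rewrite !mult_INR, !pow_INR in NP2.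
  change (INR (ff L L)) with (F L) in NP2. replace (INR 4) with 4 in NP1 by (simpl; lra).
  replace (INR 16) with 16 in NP2 by (simpl; lra).
  set (k1 := INR (K - 1)) in *. set (k2 := INR (K - 2)) in *.
  set (l1 := INR (L - 1)) in *. set (Lr := INR L) in *.
  assert (Hk1 : k1 = INR K - 1) by (unfold k1; rewrite minus_INR by lia; simpl; ring).
  assert (Hl1 : l1 = Lr - 1) by (unfold l1, Lr; rewrite minus_INR by lia; simpl; ring).
  assert (Htl : INR t = l1) by lra.
  set (P := k2 ^ (m - 2) * Lr ^ m) in *.
  assert (Pp : 0 < P).
  { unfold P. apply Rmult_lt_0_compat; apply pow_lt.
    unfold k2; rewrite minus_INR by lia; simpl; lra. lra. }
  assert (k1p : 0 < k1) by lra.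
  assert (E1 : k1 ^ (m - 1) = k1 * k1 ^ (m - 2)).
  { replace (m - 1)%nat with (S (m - 2)) by lia. reflexivity. }
  assert (k12p : 0 < k1 ^ (m - 2)) by (apply pow_lt; lra).
  set (FK2 := F (K - 2)) in *. set (FL1 := F (L - 1)) in *.
  assert (LHS : (11 / 12) * B2 * A2 * Sr * (F (K - 1) * F L) >=
                (11 / 12) * B2 * k1 * (k2 ^ (m - 2) * al) * (Lr ^ m * al)).
  { rewrite FK. 
    replace ((11 / 12) * B2 * A2 * Sr * (k1 * FK2 * F L)) with
      ((11 / 12) * B2 * k1 * (FK2 * A2) * (F L * Sr)) by ring.
    apply Rle_ge. apply Rmult_le_compat.
    - assert (0 <= k2 ^ (m - 2)) by (apply pow_le; unfold k2; apply pos_INR).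
      repeat apply Rmult_le_pos; lra.
    - assert (0 <= Lr ^ m) by (apply pow_le; lra). repeat apply Rmult_le_pos; lra.
    - apply Rmult_le_compat_l; [nra|]. lra.
    - lra. }
  assert (RHS : INR t * A1 * (Sp + Lr) * (F (K - 1) * F L) <=
                l1 * k1 ^ (m - 1) * (Lr * l1 ^ (m - 1) + Lr * F L)).
  { rewrite Htl.
    replace (l1 * A1 * (Sp + Lr) * (F (K - 1) * F L)) with
      (l1 * (F (K - 1) * A1) * (Lr * (FL1 * Sp) + Lr * F L)) by (rewrite FL; fold FL1; ring).
    apply Rmult_le_compat.
    - assert (0 <= l1) by lra. assert (0 <= F (K - 1)) by lra. repeat apply Rmult_le_pos; lra.
    - assert (0 <= FL1 * Sp) by (apply Rmult_le_pos; lra). assert (0 <= F L) by lra.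
      apply Rplus_le_le_0_compat; apply Rmult_le_pos; lra.
    - apply Rmult_le_compat_l; [lra|auto].
    - apply Rplus_le_compat_r. apply Rmult_le_compat_l; lra. }
  assert (Fin : l1 * k1 ^ (m - 1) * (Lr * l1 ^ (m - 1) + Lr * F L) <
                (11 / 12) * B2 * k1 * (k2 ^ (m - 2) * al) * (Lr ^ m * al)).
  { rewrite E1.
    assert (EB : B2 = Lr * l1 / 2) by (rewrite Hl1; lra).
    rewrite EB.
    assert (l1p : 0 < l1) by lra.
    assert (Q1 : k1 ^ (m - 2) * (l1 ^ (m - 1) + F L) <= 5 / 16 * P) by lra.
    assert (Q2 : 5 / 16 * P < (11 / 12) / 2 * al * al * P).
    { assert (Qa : 121 / 144 <= al * al) by nra.
      replace ((11 / 12) / 2 * al * al * P) with (((11 / 12) / 2 * (al * al)) * P) by ring.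
      apply Rmult_lt_compat_r; auto. lra. }
    replace (l1 * (k1 * k1 ^ (m - 2)) * (Lr * l1 ^ (m - 1) + Lr * F L)) with
      ((l1 * k1 * Lr) * (k1 ^ (m - 2) * (l1 ^ (m - 1) + F L))) by ring.
    replace (11 / 12 * (Lr * l1 / 2) * k1 * (k2 ^ (m - 2) * al) * (Lr ^ m * al)) with
      ((l1 * k1 * Lr) * ((11 / 12) / 2 * al * al * P)) by (unfold P; field).
    apply Rmult_lt_compat_l; [nra|]. lra. }
  assert (Hpos : 0 < F (K - 1) * F L) by nra.
  assert (Main : INR t * A1 * (Sp + Lr) < (11 / 12) * B2 * A2 * Sr).
  { apply Rmult_lt_reg_r with (F (K - 1) * F L); auto. lra. }
  assert ((11 / 12) * B2 * A2 * Sr <= (B2 * A2 - B3 * A3) * Sr).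
  { apply Rmult_le_compat_r; auto. lra. }
  lra.
Qed.

End Core.

Close Scope R_scope.

Theorem mainTheorem18 (n k l t : nat) :
  (t + 2 <= l)%nat -> (l <= k)%nat ->
  (INR n >= 2 * Lkt k t)%R ->
  ((2 * t + 2 <= l)%nat -> (r1 n k l t > r2 n k l t)%Z) /\
  ((l <= 2 * t + 1)%nat ->
     ~ ((k = 2 * t + 1 /\ l = 2 * t + 1)%nat) -> ~ ((k = 4 /\ l = 3)%nat) ->
     (r1 n k l t < r2 n k l t)%Z).
Proof.
  intros Hl Hk Hn.
  assert (HK : (2 <= k - t)%nat) by lia.
  set (K := (k - t)%nat) in *.
  assert (Hn' : (INR n * ln 2 >= 2 * (INR t + 1) * ln 2 +
                 2 * (INR K + 1) * ln ((INR t + 1) * (INR K + 1)))%R).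
  { unfold Lkt, log2 in Hn. unfold K. rewrite minus_INR by lia.
    pose proof ln2_pos.
    set (Y := ln ((INR t + 1) * (INR k - INR t + 1))) in *.
    replace Y with (Y / ln 2 * ln 2)%R by (field; lra).
    set (Z := (Y / ln 2)%R) in *. nra. }
  destruct (KB_core n t K HK Hn') as [Hnk HB0].
  assert (HXpos : (0 < (INR t + 1) * (INR K + 1))%R).
  { assert (0 <= INR t)%R by apply pos_INR. assert (0 <= INR K)%R by apply pos_INR. nra. }
  assert (Hm1 : (2 * t + 2 * K + 4 <= n)%nat).
  { assert (H1 : (1 * ln 2 <= ln ((INR t + 1) * (INR K + 1)))%R).
    { rewrite Rmult_1_l. apply ln_le'; [lra|].
      assert (2 <= INR K)%R by (replace 2%R with (INR 2) by (simpl; lra); apply le_INR; lia).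
      assert (0 <= INR t)%R by apply pos_INR. nra. }
    pose proof (Nbound n t K 1 Hn' H1) as H2.
    apply INR_le. rewrite !plus_INR, !mult_INR. simpl (INR 2). simpl (INR 4). lra. }
  set (L := (l - t)%nat).
  set (m := (n - t)%nat).
  assert (HB : (beta K (m - K) * ((INR t + 1) * (INR K + 1)) ^ 2 <= 2)%R) by exact HB0.
  assert (Hm : (t + 2 * K + 4 <= m)%nat) by lia.
  assert (HL2 : (2 <= L)%nat) by lia.
  assert (HLK : (L <= K)%nat) by lia.
  rewrite (r1_eq n k l t Hl Hk ltac:(lia)), (r2_eq n k l t Hl Hk ltac:(lia)).
  rewrite (alt_decomp n k l t Hl Hk ltac:(lia)).
  assert (Ecc : forall j, cc n k l t j = c m K L j) by reflexivity.
  change (cc n k l t) with (c m K L).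
  change (stirling2 (n - t - 1) (k - t - 1)) with (a m K 1). fold L m.
  pose proof (alt_bound (c m K L) (L - 2) 3 ltac:(lia)
     ltac:(intros; unfold c; lia)
     ltac:(intros; apply (dec m K L t HL2 HLK HB Hm); lia)) as AB.
  change ((-1) ^ (Z.of_nat 3 - 1))%Z with 1%Z in AB.
  set (R := alt (c m K L) 3 (L - 2)) in *.
  pose proof (dec m K L t HL2 HLK HB Hm 2 ltac:(lia)) as D23.
  assert (C1 : c m K L 1 = (Z.of_nat L * Z.of_nat (a m K 1))%Z).
  { unfold c. rewrite binom_1, Nat2Z.inj_mul. reflexivity. }
  rewrite C1.
  pose proof (a1_pos m K L t HL2 HLK) as A1.
  assert (SP : (0 < stirling2 m L)%nat) by (apply stir_pos; lia).
  set (a1 := a m K 1) in *. set (S := stirling2 m L) in *.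
  set (Sp := stirling2 (m - 1) (L - 1)) in *.
  set (c2 := c m K L 2) in *. set (c3 := c m K L 3) in *.
  split.
  - intros Hi.
    pose proof (c2_lt_a1 m K L t HL2 HLK HB Hm) as C2.
    fold c2 a1 in C2.
    assert (HA : ((Z.of_nat t + 1) * Z.of_nat a1 < Z.of_nat L * Z.of_nat a1 - c2 + R)%Z).
    { assert (Z.of_nat L >= Z.of_nat t + 2)%Z by lia. nia. }
    assert (0 <= Z.of_nat Sp)%Z by lia.
    nia.
  - intros Hii Hex1 Hex2.
    destruct (le_lt_dec L t) as [HLt|HLt].
    + pose proof (case_iia m K L t HL2 HLK HB Hm HLt) as CA. fold S Sp in CA.
      apply Nat2Z.inj_lt in CA. rewrite Nat2Z.inj_mul, Nat2Z.inj_add in CA.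
      assert (0 <= c2 - R)%Z by lia.
      nia.
    + assert (HLt1 : L = (t + 1)%nat) by lia.
      assert (HKL : (L + 1 <= K)%nat) by lia.
      assert (HK4 : (4 <= K)%nat) by lia.
      assert (Hm3 : (t + 6 * K + 8 <= m)%nat).
      { assert (H1 : (3 * ln 2 <= ln ((INR t + 1) * (INR K + 1)))%R).
        { replace (3 * ln 2)%R with (ln (2 ^ 3)) by (rewrite ln_pow by lra; simpl; ring).
          apply ln_le'; [simpl; lra|].
          assert (4 <= INR K)%R by (replace 4%R with (INR 4) by (simpl; lra); apply le_INR; lia).
          assert (1 <= INR t)%R by (replace 1%R with (INR 1) by (simpl; lra); apply le_INR; lia).
          simpl. nra. }
        pose proof (Nbound n t K 3 Hn' H1) as H2.
        assert (2 * t + 6 * K + 8 <= n)%nat.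
        { apply INR_le. rewrite !plus_INR, !mult_INR. simpl (INR 2). simpl (INR 6). simpl (INR 8). lra. }
        lia. }
      pose proof (case_iib m K L t HL2 HLK HB Hm HLt1 HKL HK4 Hm3) as CB.
      fold a1 S Sp c2 c3 in CB.
      assert (0 <= c2 - R)%Z by lia.
      assert (c2 - c3 <= c2 - R)%Z by lia.
      assert (Z.of_nat L = Z.of_nat t + 1)%Z by lia.
      assert ((c2 - c3) * Z.of_nat S <= (c2 - R) * (Z.of_nat S + Z.of_nat t))%Z by nia.
      nia.
Qed.
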